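(* The full subcategory $\mathbf{Eph}_n$ of ephemeral modules is a Serre subcategory of the category $\mathbf{Pers}_n$ of $n$-parameter persistence modules: for every short exact sequence $0\to V'\to V\to V''\to0$ in $\mathbf{Pers}_n$, the module $V$ is ephemeral if and only if both $V'$ and $V''$ are ephemeral.
   Context: Fix a field $\mathbb{k}$. $\mathbf{Pers}_n$ is the (Abelian) category of functors $V:\mathbf{R}^n\to\mathbf{Vect}_{\mathbb{k}}$, where $\mathbf{R}^n$ carries the componentwise order; $V_{s,t}$ denotes structure maps. A module $V$ is ephemeral if $V_{s-\varepsilon,s}=0$ for all $s\in\mathbb{R}^n$ and $\varepsilon>0$, where $s-\varepsilon$ subtracts $\varepsilon$ from each coordinate. *)

(* Defs.v *)
From HB Require Import structures.
From mathcomp Require Import all_boot all_order all_algebra.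
From mathcomp Require Import reals.
Set Implicit Arguments. Unset Strict Implicit. Unset Printing Implicit Defensive.
Import Order.TTheory GRing.Theory Num.Theory.
Local Open Scope ring_scope.

Definition lev (R : realType) (n : nat) (s t : 'I_n -> R) : bool :=
  [forall i, s i <= t i].

Definition shiftv (R : realType) (n : nat) (s : 'I_n -> R) (eps : R) : 'I_n -> R :=
  fun i => s i - eps.

(* An n-parameter persistence module over the field k: a functor
   (R^n, <=) -> Vect_k.  Vector spaces are lmodType k (arbitrary dimension). *)
Record pers (R : realType) (n : nat) (k : fieldType) := Pers {
  pobj : ('I_n -> R) -> lmodType k;
  pmap : forall s t, lev s t -> {linear pobj s -> pobj t};
  pmap_id : forall s (h : lev s s) (x : pobj s), pmap h x = x;
  pmap_comp : forall s t u (hst : lev s t) (htu : lev t u) (hsu : lev s u)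
      (x : pobj s), pmap hsu x = pmap htu (pmap hst x)
}.

Record pmorph (R : realType) (n : nat) (k : fieldType) (V W : pers R n k) := PMorph {
  pcomp : forall s, {linear pobj V s -> pobj W s};
  pnat : forall s t (h : lev s t) (x : pobj V s),
      pcomp t (pmap V h x) = pmap W h (pcomp s x)
}.

Definition ephemeral (R : realType) (n : nat) (k : fieldType) (V : pers R n k) : Prop :=
  forall (s : 'I_n -> R) (eps : R) (h : lev (shiftv s eps) s),
    0 < eps -> forall x : pobj V (shiftv s eps), pmap V h x = 0.

(* Short exact sequence 0 -> V' -f-> V -g-> V'' -> 0 in Pers_n
   (exactness in the functor category is pointwise). *)
Definition short_exact (R : realType) (n : nat) (k : fieldType)
    (V' V V'' : pers R n k) (f : pmorph V' V) (g : pmorph V V'') : Prop :=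
  forall s : 'I_n -> R,
    [/\ injective (pcomp f s),
        (forall y : pobj V s, pcomp g s y = 0 <-> exists x, pcomp f s x = y)
      & (forall z : pobj V'' s, exists y, pcomp g s y = z)].

(* Main.v *)
Require Import Defs.
From HB Require Import structures.
From mathcomp Require Import all_boot all_order all_algebra.
From mathcomp Require Import reals.
Import Defs.
Set Implicit Arguments. Unset Strict Implicit.
Import Order.TTheory GRing.Theory Num.Theory.
Local Open Scope ring_scope.

Definition eph2 (R : realType) (n : nat) (k : fieldType) (V : pers R n k) : Prop :=
  forall a b (h : lev a b) (eps : R), 0 < eps -> (forall i, a i + eps <= b i) ->
    forall x, pmap V h x = 0.

Lemma eph2E (R : realType) (n : nat) (k : fieldType) (V : pers R n k) :
  ephemeral V <-> eph2 V.
Proof.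
split.
- move=> E a b h eps e0 gap x.
  have hac : lev a (shiftv b eps).
    by apply/forallP => i; rewrite /shiftv lerBrDr gap.
  have hcb : lev (shiftv b eps) b.
    by apply/forallP => i; rewrite /shiftv lerBlDr lerDl ltW.
  by rewrite (pmap_comp hac hcb h) E.
- move=> E s eps h e0 x; apply: (E _ _ h eps e0) => i.
  by rewrite /shiftv subrK.
Qed.

Theorem lemma2p5 (R : realType) (n : nat) (k : fieldType)
    (V' V V'' : pers R n k) (f : pmorph V' V) (g : pmorph V V'') :
  short_exact f g ->
  (ephemeral V <-> ephemeral V' /\ ephemeral V'').
Proof.
move=> SE; rewrite !eph2E; split.
- move=> E; split.
  + move=> a b h eps e0 gap x.
    have [inj _ _] := SE b.
    apply: inj; rewrite pnat linear0.
    exact: (E _ _ h eps e0 gap).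
  + move=> a b h eps e0 gap z.
    have [_ _ sur] := SE a.
    have [y <-] := sur z.
    by rewrite -pnat (E _ _ h eps e0 gap) linear0.
- move=> [E' E''] a b h eps e0 gap y.
  pose c := fun i => b i - eps / 2.
  have gap1 : forall i, a i + eps / 2 <= c i.
    move=> i; rewrite /c lerBrDr -addrA -splitr; exact: gap.
  have gap2 : forall i, c i + eps / 2 <= b i.
    by move=> i; rewrite /c subrK.
  have e2 : 0 < eps / 2 by rewrite divr_gt0.
  have hac : lev a c.
    by apply/forallP => i; apply: le_trans (gap1 i); rewrite lerDl ltW.
  have hcb : lev c b.
    by apply/forallP => i; apply: le_trans (gap2 i); rewrite lerDl ltW.
  rewrite (pmap_comp hac hcb h).
  have [_ ex _] := SE c.
  have : pcomp g c (pmap V hac y) = 0.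
    by rewrite pnat (E'' _ _ hac _ e2 gap1).
  move/ex => [x <-].
  by rewrite -pnat (E' _ _ hcb _ e2 gap2) linear0.
Qed.
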